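(* Let $X$ be a hyperbolic approximation with parameter $r$ of a metric space $Z$, and let $v_1,v_2$ be any two vertices of $X$. If $w$ is a branch point of $\{v_1,v_2\}$, then \[\frac{r^2}{4}\,\operatorname{diam}(B(w))\le\operatorname{diam}(B(v_1)\cup B(v_2)),\] i.e. $\frac{r^2}{4}\le\frac{\operatorname{diam}(B(v_1)\cup B(v_2))}{\operatorname{diam}(B(w))}$ whenever $\operatorname{diam}(B(w))>0$.
   Context: Hyperbolic approximation: let $(Z,d)$ be a metric space and fix a parameter $r$ with $0<r\le1/6$. For every $k\in\mathbb{Z}$ choose a maximal $r^k$-separated set $V_k\subset Z$ (distinct points at distance $\ge r^k$, maximal with this property). For $v\in V_k$ let $B(v)$ be the ball in $Z$ of radius $2r^k$ centred at $v$, $\bar B(v)$ the closed ball. The vertex set $V$ consists, for each $k$, of the balls $B(v)$, $v\in V_k$ (equal balls from the same level give the same vertex; equal balls at different levels are different vertices); a vertex from level $k$ has level $l(v)=k$. Two vertices are joined by an edge iff they are on the same level and their closed balls intersect (horizontal edge), or they are on neighbouring levels $k,k+1$ and the ball of the level-$(k+1)$ vertex is contained in the ball of the level-$k$ vertex (radial edge). $X$ carries the path metric with all edges of length $1$. A radial geodesic is an edge path all of whose edges are radial and along which the level function is monotone. For $V'\subset V$, a vertex $u$ is a cone point of $V'$ if $l(u)\le\inf_{v\in V'}l(v)$ and every $v\in V'$ is connected to $u$ by a radial geodesic; a branch point of $V'$ is a cone point of maximal level. *)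

(* Defs.v *)
From Stdlib Require Import Reals ZArith.
From Coquelicot Require Import Coquelicot.
Open Scope R_scope.

Definition is_metric {P : Type} (d : P -> P -> R) : Prop :=
  (forall x y, 0 <= d x y) /\
  (forall x y, d x y = 0 <-> x = y) /\
  (forall x y, d x y = d y x) /\
  (forall x y z, d x z <= d x y + d y z).

Definition separated {P : Type} (d : P -> P -> R) (s : R) (S : P -> Prop) : Prop :=
  forall x y, S x -> S y -> x <> y -> s <= d x y.

Definition maximal_separated {P : Type} (d : P -> P -> R) (s : R) (S : P -> Prop) : Prop :=
  separated d s S /\
  (forall W : P -> Prop, separated d s W -> (forall x, S x -> W x) -> forall x, W x -> S x).

Definition hyp_approx_data {P : Type} (d : P -> P -> R) (r : R) (V : Z -> P -> Prop) : Prop :=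
  is_metric d /\ 0 < r /\ r <= 1/6 /\
  forall k : Z, maximal_separated d (powerRZ r k) (V k).

(** A vertex of X is represented by its level k and a centre c in V_k; the
    corresponding ball is B(c) = open ball of radius 2 r^k centred at c.
    Two representations denote the same vertex iff same level and same ball. *)
Definition ball_of {P : Type} (d : P -> P -> R) (r : R) (k : Z) (c : P) : P -> Prop :=
  fun z => d c z < 2 * powerRZ r k.

Definition set_eq {P : Type} (A B : P -> Prop) : Prop := forall z, A z <-> B z.
Definition set_incl {P : Type} (A B : P -> Prop) : Prop := forall z, A z -> B z.

Definition radial_edge {P : Type} (d : P -> P -> R) (r : R) (k : Z) (c c' : P) : Prop :=
  set_incl (ball_of d r (k + 1) c') (ball_of d r k c).

(** There is a radial geodesic between vertex (ku,cu) and vertex (kv,cv) with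
    ku <= kv: an edge path with only radial edges along which the level is
    monotone, i.e. a chain of vertices at levels ku, ku+1, ..., kv = ku+n,
    consecutive ones joined by radial edges. *)
Definition radial_geodesic {P : Type} (d : P -> P -> R) (r : R) (V : Z -> P -> Prop)
    (ku : Z) (cu : P) (kv : Z) (cv : P) : Prop :=
  exists (n : nat) (f : nat -> P),
    kv = (ku + Z.of_nat n)%Z /\
    (forall i, (i <= n)%nat -> V (ku + Z.of_nat i)%Z (f i)) /\
    set_eq (ball_of d r ku (f 0%nat)) (ball_of d r ku cu) /\
    set_eq (ball_of d r kv (f n)) (ball_of d r kv cv) /\
    (forall i, (i < n)%nat -> radial_edge d r (ku + Z.of_nat i)%Z (f i) (f (S i))).

Definition cone_point2 {P : Type} (d : P -> P -> R) (r : R) (V : Z -> P -> Prop)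
    (k1 : Z) (c1 : P) (k2 : Z) (c2 : P) (ku : Z) (cu : P) : Prop :=
  V ku cu /\ (ku <= k1)%Z /\ (ku <= k2)%Z /\
  radial_geodesic d r V ku cu k1 c1 /\ radial_geodesic d r V ku cu k2 c2.

Definition branch_point2 {P : Type} (d : P -> P -> R) (r : R) (V : Z -> P -> Prop)
    (k1 : Z) (c1 : P) (k2 : Z) (c2 : P) (kw : Z) (cw : P) : Prop :=
  cone_point2 d r V k1 c1 k2 c2 kw cw /\
  forall ku cu, cone_point2 d r V k1 c1 k2 c2 ku cu -> (ku <= kw)%Z.

Definition diam {P : Type} (d : P -> P -> R) (A : P -> Prop) : Rbar :=
  Lub_Rbar (fun t => exists x y, A x /\ A y /\ t = d x y).

Definition set_union {P : Type} (A B : P -> Prop) : P -> Prop := fun z => A z \/ B z.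

(* Main.v *)
Require Import Defs.
From Stdlib Require Import Reals ZArith Lia Lra Psatz Classical.
From Coquelicot Require Import Coquelicot.
Open Scope R_scope.

Lemma pw_succ (r : R) (j : Z) : 0 < r -> powerRZ r (j + 1) = powerRZ r j * r.
Proof. intros. rewrite powerRZ_add by lra. simpl. ring. Qed.

Lemma nearest {P : Type} (d : P -> P -> R) (r : R) (V : Z -> P -> Prop)
  (HX : hyp_approx_data d r V) k x : exists a, V k a /\ d a x < powerRZ r k.
Proof.
 destruct HX as [[Hpos [Hzero [Hsym Htri]]] [Hr [Hr6 Hmax]]].
 destruct (Hmax k) as [Hsep Hmx].
 destruct (classic (exists a, V k a /\ d a x < powerRZ r k)) as [H|H]; auto.
 exfalso.
 assert (Hx: V k x).
 { apply (Hmx (fun z => V k z \/ z = x)); [| intros; left; auto | right; auto].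
   intros y z [Hy|Hy] [Hz|Hz] Hne.
   - apply Hsep; auto.
   - subst z. destruct (Rlt_le_dec (d y x) (powerRZ r k)) as [h|h]; auto.
     exfalso; apply H; eauto.
   - subst y. rewrite Hsym. destruct (Rlt_le_dec (d z x) (powerRZ r k)) as [h|h]; auto.
     exfalso; apply H; eauto.
   - subst; congruence. }
 apply H. exists x. split; auto. rewrite (proj2 (Hzero x x) eq_refl). apply powerRZ_lt; lra.
Qed.

Lemma triv_geo {P : Type} (d : P -> P -> R) (r : R) (V : Z -> P -> Prop) k c :
  V k c -> radial_geodesic d r V k c k c.
Proof.
  intros H. exists 0%nat, (fun _ => c). split; [simpl; lia|]. split.
  - intros i Hi. assert (i = 0%nat) by lia. subst. simpl. rewrite Z.add_0_r. auto.
  - split; [intros z; tauto|]. split; [intros z; tauto|]. intros i Hi; lia.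
Qed.

Lemma prepend {P : Type} (d : P -> P -> R) (r : R) (V : Z -> P -> Prop) j a a' kv c :
  V j a -> radial_geodesic d r V (j+1) a' kv c ->
  set_incl (ball_of d r (j+1) a') (ball_of d r j a) ->
  radial_geodesic d r V j a kv c.
Proof.
  intros Ha [n [f [Hkv [HV [H0 [Hn He]]]]]] Hinc.
  exists (S n), (fun i => match i with O => a | S i => f i end).
  repeat split.
  - lia.
  - intros [|i] Hi. rewrite Z.add_0_r; auto.
    replace (j + Z.of_nat (S i))%Z with (j + 1 + Z.of_nat i)%Z by lia. apply HV; lia.
  - intros H; exact H.
  - intros H; exact H.
  - intros H. apply Hn. exact H.
  - intros H. apply Hn. exact H.
  - intros [|i] Hi.
    + replace (j + Z.of_nat 0)%Z with j by lia. intros z Hz. apply Hinc, H0, Hz.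
    + replace (j + Z.of_nat (S i))%Z with (j + 1 + Z.of_nat i)%Z by lia. apply He. lia.
Qed.

Lemma upchain {P : Type} (d : P -> P -> R) (r : R) (V : Z -> P -> Prop)
  (HX : hyp_approx_data d r V) (n : nat) : forall j c, V (j + Z.of_nat n)%Z c ->
  exists a, V j a /\ radial_geodesic d r V j a (j + Z.of_nat n) c /\ d a c <= 6/5 * powerRZ r j.
Proof.
  pose proof HX as HX'.
  destruct HX' as [[Hpos [Hzero [Hsym Htri]]] [Hr [Hr6 Hmax]]].
  induction n; intros j c Hc.
  - exists c. simpl in *. rewrite Z.add_0_r in *. split; auto. split; [apply triv_geo; auto|].
    rewrite (proj2 (Hzero c c) eq_refl). pose proof (powerRZ_lt r j Hr). lra.
  - assert (Hc': V (j+1 + Z.of_nat n)%Z c).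
    { replace (j + 1 + Z.of_nat n)%Z with (j + Z.of_nat (S n))%Z by lia. auto. }
    destruct (IHn (j+1)%Z c Hc') as [a' [Ha' [Hg Hd]]].
    destruct (nearest d r V HX j a') as [a [Ha Hd']].
    pose proof (powerRZ_lt r j Hr) as Hp. rewrite pw_succ in Hd by lra.
    exists a. split; auto. split.
    + replace (j + Z.of_nat (S n))%Z with (j+1+Z.of_nat n)%Z by lia.
      apply (prepend d r V j a a'); auto. intros z Hz. unfold ball_of in *.
      rewrite pw_succ in Hz by lra.
      pose proof (Htri a a' z). nra.
    + pose proof (Htri a a' c). nra.
Qed.

Lemma getu {P : Type} (d : P -> P -> R) (r : R) (V : Z -> P -> Prop)
  (HX : hyp_approx_data d r V) m k c : (m <= k)%Z -> V k c ->
  exists u, V m u /\ radial_geodesic d r V m u k c /\ d u c <= 6/5 * powerRZ r m.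
Proof.
  intros Hk Hc.
  assert (E : k = (m + Z.of_nat (Z.to_nat (k - m)))%Z) by (rewrite Z2Nat.id; lia).
  rewrite E in Hc |- *. apply upchain; auto.
Qed.

Lemma core {P : Type} (d : P -> P -> R) (r : R) (V : Z -> P -> Prop)
  (HX : hyp_approx_data d r V) m k1 c1 k2 c2 u
  (Hk1: (m <= k1)%Z) (Hk2: (m < k2)%Z) (Hv2 : V k2 c2) (Hu: V m u)
  (Hg: radial_geodesic d r V m u k1 c1) (Hd: d u c1 <= 6/5 * powerRZ r m)
  (Hdel : d c1 c2 < powerRZ r (m+1)) : cone_point2 d r V k1 c1 k2 c2 m u.
Proof.
  pose proof HX as HX'.
  destruct HX' as [[Hpos [Hzero [Hsym Htri]]] [Hr [Hr6 Hmax]]].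
  pose proof (powerRZ_lt r m Hr) as Hp.
  unfold cone_point2. repeat split; try lia; auto.
  destruct (getu d r V HX (m+1) k2 c2) as [b [Hb [Hgb Hdb]]]; auto; try lia.
  apply (prepend d r V m u b); auto.
  intros z Hz. unfold ball_of in *. rewrite pw_succ in Hz, Hdb, Hdel by lra.
  pose proof (Htri u c1 z). pose proof (Htri c1 c2 z). pose proof (Htri c2 b z).
  rewrite (Hsym c2 b) in *. nra.
Qed.

Lemma cone_swap {P : Type} (d : P -> P -> R) (r : R) (V : Z -> P -> Prop) k1 c1 k2 c2 m u :
  cone_point2 d r V k1 c1 k2 c2 m u -> cone_point2 d r V k2 c2 k1 c1 m u.
Proof. unfold cone_point2; tauto. Qed.

Lemma diam_ge {P : Type} (d : P -> P -> R) (A : P -> Prop) x y :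
  A x -> A y -> Rbar_le (Finite (d x y)) (diam d A).
Proof.
  intros. unfold diam. destruct (Lub_Rbar_correct (fun t => exists x y, A x /\ A y /\ t = d x y)) as [H1 _].
  apply H1. exists x, y. auto.
Qed.

Lemma diam_ub {P : Type} (d : P -> P -> R) (A : P -> Prop) (Y : Rbar) :
  (forall x y, A x -> A y -> Rbar_le (Finite (d x y)) Y) -> Rbar_le (diam d A) Y.
Proof.
  intros H. unfold diam. destruct (Lub_Rbar_correct (fun t => exists x y, A x /\ A y /\ t = d x y)) as [_ H2].
  apply H2. intros t [x [y [Hx [Hy ->]]]]. auto.
Qed.

Lemma diam_ball {P : Type} (d : P -> P -> R) (r : R) (V : Z -> P -> Prop)
  (HX : hyp_approx_data d r V) k c :
  exists x, diam d (ball_of d r k c) = Finite x /\ 0 <= x <= 4 * powerRZ r k.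
Proof.
  destruct HX as [[Hpos [Hzero [Hsym Htri]]] [Hr [Hr6 Hmax]]].
  pose proof (powerRZ_lt r k Hr) as Hp.
  assert (Hc : ball_of d r k c c) by (unfold ball_of; rewrite (proj2 (Hzero c c) eq_refl); lra).
  assert (H1 := diam_ge d (ball_of d r k c) c c Hc Hc).
  assert (H2 : Rbar_le (diam d (ball_of d r k c)) (Finite (4 * powerRZ r k))).
  { apply diam_ub. intros x y Hx Hy. unfold ball_of in *. simpl.
    pose proof (Htri x c y). rewrite (Hsym x c) in *. lra. }
  destruct (diam d (ball_of d r k c)) as [x| |]; simpl in *; try tauto.
  exists x. rewrite (proj2 (Hzero c c) eq_refl) in H1. auto.
Qed.

Theorem lemma3p10 (P : Type) (d : P -> P -> R) (r : R) (V : Z -> P -> Prop)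
  (HX : hyp_approx_data d r V)
  (k1 : Z) (c1 : P) (k2 : Z) (c2 : P) (kw : Z) (cw : P)
  (Hv1 : V k1 c1) (Hv2 : V k2 c2)
  (Hw : branch_point2 d r V k1 c1 k2 c2 kw cw) :
  Rbar_le (Rbar_mult (r ^ 2 / 4) (diam d (ball_of d r kw cw)))
          (diam d (set_union (ball_of d r k1 c1) (ball_of d r k2 c2))).
Proof.
  pose proof HX as HX'.
  destruct HX' as [[Hpos [Hzero [Hsym Htri]]] [Hr [Hr6 Hmax]]].
  destruct Hw as [[Hcw [Hkw1 [Hkw2 [Hg1 Hg2]]]] Hmaxw].
  destruct (diam_ball d r V HX kw cw) as [x [Hx [Hx0 Hx4]]].
  pose proof (powerRZ_lt r kw Hr) as Hp.
  assert (Hball : forall k c, ball_of d r k c c).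
  { intros k c. unfold ball_of; rewrite (proj2 (Hzero c c) eq_refl). pose proof (powerRZ_lt r k Hr); lra. }
  assert (Htriv : forall cv, radial_geodesic d r V kw cw kw cv ->
            set_incl (ball_of d r kw cw) (ball_of d r kw cv)).
  { intros cv [n [f [Hkv [_ [H0 [Hn _]]]]]].
    assert (n = 0%nat) by lia. subst n. intros z Hz. apply Hn. apply H0. exact Hz. }
  assert (Hsmall : r ^ 2 / 4 * x <= x).
  { assert (Hr2 : r ^ 2 <= 1) by (simpl; nra).
    apply Rle_trans with (1 / 4 * x); [|lra]. apply Rmult_le_compat_r; lra. }
  rewrite Hx. change (Rbar_mult (r^2/4) (Finite x)) with (Finite (r^2/4*x)).
  destruct (Z.eq_dec kw k1) as [E|E].
  { subst kw. apply Rbar_le_trans with (Finite x); [simpl; lra|].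
    rewrite <- Hx. apply diam_ub. intros a b Ha Hb. apply diam_ge; left; apply (Htriv c1); auto. }
  destruct (Z.eq_dec kw k2) as [E2|E2].
  { subst kw. apply Rbar_le_trans with (Finite x); [simpl; lra|].
    rewrite <- Hx. apply diam_ub. intros a b Ha Hb. apply diam_ge; right; apply (Htriv c2); auto. }
  assert (Hpw2 : powerRZ r (kw + 1 + 1) = powerRZ r kw * r * r) by (rewrite !pw_succ; lra).
  destruct (Rlt_le_dec (d c1 c2) (powerRZ r (kw + 1 + 1))) as [Hlt|Hge].
  - exfalso.
    assert (Hcone : exists u, cone_point2 d r V k1 c1 k2 c2 (kw+1) u).
    { destruct (Z.eq_dec (kw+1) k2) as [F2|F2].
      - destruct (Z.eq_dec (kw+1) k1) as [F1|F1].
        + destruct (classic (c1 = c2)) as [Ec|Ec].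
          * subst c2. exists c1. subst k1 k2. repeat split; try lia; auto; apply triv_geo; auto.
          * exfalso. subst k1 k2. destruct (Hmax (kw+1)%Z) as [Hsep _]. pose proof (Hsep c1 c2 Hv1 Hv2 Ec).
            rewrite pw_succ in H, Hlt by lra. rewrite pw_succ in Hlt by lra.
            assert (Hq : 0 < powerRZ r kw * r) by (apply Rmult_lt_0_compat; lra).
            assert (powerRZ r kw * r * r < powerRZ r kw * r) by (rewrite <- (Rmult_1_r (powerRZ r kw * r)) at 2; apply Rmult_lt_compat_l; lra). lra.
        + destruct (getu d r V HX (kw+1) k2 c2) as [u [Hu [Hgu Hdu]]]; auto; try lia.
          exists u. apply cone_swap. apply (core d r V HX); auto; try lia.
          rewrite Hsym; auto.
      - destruct (getu d r V HX (kw+1) k1 c1) as [u [Hu [Hgu Hdu]]]; auto; try lia.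
        exists u. apply (core d r V HX); auto; try lia. }
    destruct Hcone as [u Hu]. specialize (Hmaxw _ _ Hu). lia.
  - apply Rbar_le_trans with (Finite (d c1 c2)).
    + simpl. rewrite Hpw2 in Hge. nra.
    + apply diam_ge; [left|right]; apply Hball.
Qed.
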